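(* Let $B\in\mathbb{F}_2^{s\times s}$ have all row and column weights equal to $w$, and let $H_X(B)=[\,B\otimes I_s\mid I_s\otimes B^{\mathsf T}\,]$, $H_Z(B)=[\,I_s\otimes B\mid B^{\mathsf T}\otimes I_s\,]$. Then for every $P\ge1$ and every CPM $P$ lift $(\hat H_X,\hat H_Z)$ of $(H_X(B),H_Z(B))$ whose shifts satisfy the CSS orthogonality zero constraints, each of the Tanner graphs of $\hat H_X$ and $\hat H_Z$ contains at least \[ N_8(B)=s^2\binom{w}{2}^2 \] Tanner 8-cycles forced by orthogonality (8-cycles of the base Tanner graph whose voltage is $0\bmod P$ for every such lift). In particular, if the Tanner graphs of $H_X(B)$ and $H_Z(B)$ have no 4-cycles and no 6-cycles, then the Tanner graphs of $\hat H_X$ and $\hat H_Z$ have girth exactly $8$ for every such CPM $P$ lift.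
   Context: Tanner graph of a binary matrix: bipartite graph of rows (checks) and columns (variables), edge iff the entry is $1$; girth is the length of a shortest cycle. A CPM $P$ lift assigns a shift in $\mathbb{Z}_P$ to each nonzero entry of the base matrices and replaces it by the $P\times P$ identity cyclically shifted by that amount (zero entries by zero blocks). CSS orthogonality zero constraints: for each row $x$ of $H_X$ and row $z$ of $H_Z$ the shared columns are paired and for each pair $\{c,c'\}$, $s^X_{x,c}-s^Z_{z,c}-s^X_{x,c'}+s^Z_{z,c'}\equiv0\pmod P$. The voltage of a base Tanner cycle is the alternating signed sum of the shifts of its edges; a base cycle lifts to closed cycles of the same length iff its voltage is $0\bmod P$. *)

(* Defs.v *)
From mathcomp Require Import all_boot all_order all_algebra.
Set Implicit Arguments. Unset Strict Implicit. Unset Printing Implicit Defensive.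
Import GRing.Theory.

(* Product/sum index types let us write Kronecker products and
   horizontal concatenations entrywise (lexicographic index order). *)
Definition bmat (R C : finType) := R -> C -> 'F_2.

Definition mx_of_B (s : nat) (B : 'M['F_2]_s) : bmat 'I_s 'I_s := fun i j => B i j.

Definition idm (T : finType) : bmat T T := fun i j => ((i == j) : nat)%:R%R.
Definition trm (R C : finType) (A : bmat R C) : bmat C R := fun i j => A j i.

Definition kron (R1 C1 R2 C2 : finType) (A : bmat R1 C1) (B : bmat R2 C2)
  : bmat (R1 * R2)%type (C1 * C2)%type := fun r c => (A r.1 c.1 * B r.2 c.2)%R.

Definition hcat (R C1 C2 : finType) (A : bmat R C1) (B : bmat R C2)
  : bmat R (C1 + C2)%type :=
  fun r c => match c with inl c1 => A r c1 | inr c2 => B r c2 end.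

Definition HX (s : nat) (B : 'M['F_2]_s) :=
  hcat (kron (mx_of_B B) (@idm 'I_s)) (kron (@idm 'I_s) (trm (mx_of_B B))).
Definition HZ (s : nat) (B : 'M['F_2]_s) :=
  hcat (kron (@idm 'I_s) (mx_of_B B)) (kron (trm (mx_of_B B)) (@idm 'I_s)).

Definition tanner (R C : finType) (H : bmat R C) : rel (R + C)%type :=
  fun u v => match u, v with
             | inl r, inr c => H r c != 0%R
             | inr c, inl r => H r c != 0%R
             | _, _ => false
             end.

Definition is_cycle (V : finType) (adj : rel V) (p : seq V) :=
  ucycleb adj p && (2 < size p).

(* The (undirected) edge set of a cyclic sequence; two cycles are identified iff
   they have the same edge set (so rotations/reversals are not counted twice). *)
Definition cyc_edges (V : finType) (p : seq V) : {set {set V}} :=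
  [set [set e.1; e.2] | e in zip p (rot 1 p)].

Definition is_ncycle_edges (V : finType) (adj : rel V) (n : nat) (E : {set {set V}}) :=
  exists p : seq V, [/\ is_cycle adj p, size p = n & E = cyc_edges p].

Definition has_ncycles (V : finType) (adj : rel V) (n N : nat) :=
  exists F : {set {set {set V}}},
    N <= #|F| /\ forall E, E \in F -> is_ncycle_edges adj n E.

Definition girth_is (V : finType) (adj : rel V) (g : nat) :=
  (exists p : seq V, is_cycle adj p /\ size p = g) /\
  (forall p : seq V, is_cycle adj p -> g <= size p).

Definition cpm (P : nat) (t a b : 'I_P) : 'F_2 :=
  ((val b == ((a + t) %% P)%N) : nat)%:R%R.

Definition cpm_lift (P : nat) (R C : finType) (H : bmat R C) (sh : R -> C -> 'I_P)
  : bmat (R * 'I_P)%type (C * 'I_P)%type :=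
  fun r c => (H r.1 c.1 * cpm (sh r.1 c.1) r.2 c.2)%R.

Definition css_orth (P : nat) (RX RZ C : finType) (HX : bmat RX C) (HZ : bmat RZ C)
  (sX : RX -> C -> 'I_P) (sZ : RZ -> C -> 'I_P) :=
  forall x z c c', c != c' ->
    HX x c != 0%R -> HZ z c != 0%R -> HX x c' != 0%R -> HZ z c' != 0%R ->
    (Posz (sX x c) - Posz (sZ z c) - Posz (sX x c') + Posz (sZ z c') = 0 %[mod (Posz P)])%Z.

Definition edge_volt (P : nat) (R C : finType) (sh : R -> C -> 'I_P)
  (e : ((R + C) * (R + C))%type) : int :=
  match e with
  | (inl r, inr c) => Posz (sh r c)
  | (inr c, inl r) => (- Posz (sh r c))%R
  | _ => 0%R
  end.

Definition voltage (P : nat) (R C : finType) (sh : R -> C -> 'I_P) (p : seq (R + C)%type) : int :=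
  (\sum_(e <- zip p (rot 1 p)) edge_volt sh e)%R.

(* Main.v *)
Require Import Defs.
From mathcomp Require Import all_boot all_order all_algebra.

Module Aux.
From mathcomp Require Import ring zify.
Import GRing.Theory.
Set Implicit Arguments. Unset Strict Implicit. Unset Printing Implicit Defensive.

Section Lift.
Variables (R C : finType) (H : bmat R C) (P : nat) (hP : 0 < P) (sh : R -> C -> 'I_P).

Definition LV := ((R * 'I_P) + (C * 'I_P))%type.
Definition proj (x : LV) : (R + C)%type :=
  match x with inl (r, _) => inl r | inr (c, _) => inr c end.
Definition fib (x : LV) : 'I_P := match x with inl (_, i) => i | inr (_, j) => j end.
Definition mk (v : (R + C)%type) (t : 'I_P) : LV :=
  match v with inl r => inl (r, t) | inr c => inr (c, t) end.
Definition ordm (n : nat) : 'I_P := Ordinal (ltn_pmod n hP).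
Definition nxt (x : LV) (v : (R + C)%type) : LV :=
  match x, v with
  | inl (r, i), inr c => inr (c, ordm (i + sh r c))
  | inr (c, j), inl r => inl (r, ordm (j + (P - sh r c)))
  | _, _ => mk v (fib x)
  end.

Local Notation adjL := (tanner (cpm_lift H sh)).
Local Notation adjB := (tanner H).

Lemma cpm_neq0 (a : 'F_2) (t i j : 'I_P) :
  (a * cpm t i j != 0)%R = (a != 0)%R && (val j == (i + t) %% P).
Proof.
rewrite /cpm; case: (val j == _) => /=.
  by rewrite mulr1 andbT.
by rewrite mulr0 eqxx andbF.
Qed.

Lemma adjL_rc r i c j :
  adjL (inl (r, i)) (inr (c, j)) = (H r c != 0)%R && (val j == (i + sh r c) %% P).
Proof. by rewrite /= /cpm_lift /= cpm_neq0. Qed.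
Lemma adjL_cr r i c j :
  adjL (inr (c, j)) (inl (r, i)) = (H r c != 0)%R && (val j == (i + sh r c) %% P).
Proof. by rewrite /= /cpm_lift /= cpm_neq0. Qed.

Lemma proj_nxt x v : proj (nxt x v) = v.
Proof. by case: x => [[r i]|[c j]]; case: v. Qed.

Lemma adjL_proj x y : adjL x y -> adjB (proj x) (proj y).
Proof.
case: x => [[r i]|[c j]]; case: y => [[r' i']|[c' j']] //.
  by rewrite adjL_rc => /andP[].
by rewrite adjL_cr => /andP[].
Qed.

Lemma adj_nxt x v : adjB (proj x) v -> adjL x (nxt x v).
Proof.
case: x => [[r i]|[c j]]; case: v => [r'|c'] // /= h.
  by rewrite /cpm_lift /= cpm_neq0 h /=.
rewrite /cpm_lift /= cpm_neq0 h /= modnDml -addnA subnK; last exact: ltnW.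
by rewrite modnDr modn_small.
Qed.

Lemma nxt_volt x v : adjB (proj x) v ->
  (Posz (fib (nxt x v)) = Posz (fib x) + edge_volt sh (proj x, v) %[mod Posz P])%Z.
Proof.
case: x => [[r i]|[c j]]; case: v => [r'|c'] //= _.
  by rewrite -modz_nat modz_mod PoszD.
rewrite -modz_nat modz_mod PoszD -subzn; last exact: ltnW.
by rewrite addrA -addrA (addrC (Posz P)) addrA modzDr.
Qed.

Lemma map_proj_scanl x s : map proj (scanl nxt x s) = s.
Proof. by elim: s x => //= v s IH x; rewrite proj_nxt IH. Qed.

Lemma path_scanl x s : path adjB (proj x) s -> path adjL x (scanl nxt x s).
Proof.
elim: s x => //= v s IH x /andP[h1 h2].
rewrite adj_nxt //=; apply: IH; by rewrite proj_nxt.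
Qed.

Lemma volt_scanl x s : path adjB (proj x) s ->
  (Posz (fib (foldl nxt x s)) =
     Posz (fib x) + \sum_(e <- zip (belast (proj x) s) s) edge_volt sh e %[mod Posz P])%Z.
Proof.
elim: s x => [|v s IH] x /=.
  by rewrite big_nil addr0.
move=> /andP[h1 h2].
have := IH (nxt x v); rewrite proj_nxt => /(_ h2) ->.
rewrite big_cons addrA -modzDml (nxt_volt h1) modzDml; done.
Qed.

Lemma proj_mk v t : proj (mk v t) = v. Proof. by case: v. Qed.
Lemma fib_mk v t : fib (mk v t) = t. Proof. by case: v. Qed.
Lemma mk_proj x : mk (proj x) (fib x) = x. Proof. by case: x => [[]|[]]. Qed.

Lemma lift_cycle p : is_cycle adjB p -> (voltage sh p = 0 %[mod Posz P])%Z ->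
  exists q, is_cycle adjL q /\ map proj q = p.
Proof.
case: p => [|v s] //; rewrite /is_cycle => /andP[/andP[hc hu] hsz] hv.
set x0 := mk v (ordm 0).
have hp : path adjB (proj x0) (rcons s v) by rewrite proj_mk.
have := volt_scanl hp; rewrite proj_mk belast_rcons.
rewrite (_ : zip (v :: s) (rcons s v) = zip (v :: s) (rot 1 (v :: s))); last by rewrite rot1_cons.
rewrite -/(voltage sh (v :: s)) -modzDmr hv modzDmr addr0 fib_mk /= !modz_nat => /eqP.
rewrite eqz_nat !mod0n modn_small // => /eqP hf.
set y := foldl nxt x0 (rcons s v).
have hy : y = x0.
  rewrite -(mk_proj y) /x0; congr mk; first by rewrite /y foldl_rcons proj_nxt.
  by apply: val_inj; rewrite /= hf mod0n.
exists (x0 :: scanl nxt x0 s); split; last by rewrite /= map_proj_scanl proj_mk.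
rewrite /is_cycle /ucycleb /= size_scanl.
have hu' : uniq (x0 :: scanl nxt x0 s).
  by apply: (@map_uniq _ _ proj); rewrite /= map_proj_scanl proj_mk.
move: hu' hsz => /= /andP[-> ->] /= ->; rewrite !andbT.
have := path_scanl hp; by rewrite scanl_rcons -/y hy.
Qed.

Definition pie (E : {set {set LV}}) : {set {set (R + C)%type}} := [set [set proj x | x in e] | e : {set LV} in E].

Lemma zip_map2 (T U : Type) (f : T -> U) (a b : seq T) :
  zip (map f a) (map f b) = map (fun e => (f e.1, f e.2)) (zip a b).
Proof. by elim: a b => [|x a IH] [|y b] //=; rewrite IH. Qed.

Lemma pie_cyc q : pie (cyc_edges q) = cyc_edges (map proj q).
Proof.
rewrite /pie /cyc_edges -imset_comp -map_rot zip_map2.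
apply/setP => S; apply/imsetP/imsetP => [[e he ->]|[e /mapP[e0 he0 ->] ->]].
  exists (proj e.1, proj e.2); first by apply/mapP; exists e.
  by rewrite /= imsetU1 imset_set1.
by exists e0 => //=; rewrite imsetU1 imset_set1.
Qed.

Lemma lift_count n N :
  (exists F0 : {set {set {set (R + C)%type}}}, N <= #|F0| /\
     forall E, E \in F0 -> exists p, [/\ is_cycle adjB p, size p = n, E = cyc_edges p &
        (voltage sh p = 0 %[mod Posz P])%Z]) ->
  has_ncycles adjL n N.
Proof.
case=> F0 [hN hF0].
exists [set cyc_edges (tval q) | q in [pred q : n.-tuple LV | is_cycle adjL q]]; split.
  apply: (leq_trans hN); apply: (leq_trans _ (leq_imset_card pie _)).
  apply: subset_leq_card; apply/subsetP => E /hF0 [p [hc hs -> hv]].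
  have [q [hq hpq]] := lift_cycle hc hv.
  have hsq : size q == n by rewrite -hs -hpq size_map.
  apply/imsetP; exists (cyc_edges q); last by rewrite pie_cyc hpq.
  by apply/imsetP; exists (Tuple hsq).
move=> E /imsetP[q hq ->]; exists (tval q); split => //; exact: size_tuple.
Qed.

Definition side (v : (R + C)%type) : bool := if v is inl _ then true else false.

Lemma adjB_side u v : adjB u v -> side u = ~~ side v.
Proof. by case: u; case: v. Qed.

Lemma path_side x s : path adjB x s -> side (last x s) = side x (+) odd (size s).
Proof.
elim: s x => [|y s IH] x /=; first by rewrite addbF.
move=> /andP[h1 h2]; rewrite (IH _ h2) (adjB_side h1).
by case: (side y); case: (odd (size s)).
Qed.

Lemma cycle_even p : cycle adjB p -> ~~ odd (size p).
Proof.
case: p => [|x s] //= /path_side; rewrite last_rcons size_rcons /=.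
by case: (side x); case: (odd (size s)).
Qed.

Lemma adjL_sym : symmetric adjL.
Proof. by move=> [[r i]|[c j]] [[r' i']|[c' j']]. Qed.

Lemma adjL_uniq y x x' : adjL y x -> adjL y x' -> proj x = proj x' -> x = x'.
Proof.
case: y => [[r i]|[c j]]; case: x => [[r1 i1]|[c1 j1]] //; case: x' => [[r2 i2]|[c2 j2]] //=.
  rewrite /cpm_lift /= !cpm_neq0 => /andP[_ /eqP h1] /andP[_ /eqP h2] [e]; subst c2.
  by congr inr; congr pair; apply: val_inj; rewrite /= h1 h2.
rewrite /cpm_lift /= !cpm_neq0 => /andP[_ /eqP h1] /andP[_ /eqP h2] [e]; subst r2.
congr inl; congr pair; apply: val_inj => /=.
have : (i1 + sh r1 c == i2 + sh r1 c %[mod P]) by rewrite -h1 -h2.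
by rewrite eqn_modDr !modn_small // => /eqP.
Qed.

Lemma projS a b : adjL a b -> proj a != proj b.
Proof.
move=> /adjL_proj /adjB_side h; apply/eqP => e; move: h; rewrite e.
by case: (side _).
Qed.

Lemma projD a b c : adjL a b -> adjL b c -> a != c -> proj a != proj c.
Proof.
move=> h1 h2 hac; apply/eqP => e; move/eqP: hac; apply.
by apply: (adjL_uniq (y := b)) => //; rewrite adjL_sym.
Qed.

Lemma projS3 a b c d : adjL a b -> adjL b c -> adjL c d -> proj a != proj d.
Proof.
move=> /adjL_proj /adjB_side h1 /adjL_proj /adjB_side h2 /adjL_proj /adjB_side h3.
apply/eqP => e; move: h1; rewrite h2 h3 e.
by case: (side _).
Qed.

Lemma short_cycle q : is_cycle adjL q -> size q < 8 ->
  exists p, is_cycle adjB p /\ (size p = 4 \/ size p = 6).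
Proof.
move=> hq hs; exists (map proj q).
have hcb : cycle adjB (map proj q).
  rewrite cycle_map; apply: sub_cycle (andP (andP hq).1).1 => a b; exact: adjL_proj.
have hev := cycle_even hcb; rewrite size_map in hev.
have h2 : 2 < size q by case/andP: hq.
have hsz : size q = 4 \/ size q = 6.
  move: hev h2 hs; case: (size q) => [|[|[|[|[|[|[|[|n]]]]]]]] //; by [left|right].
move: hq hcb; rewrite /is_cycle /ucycleb /= size_map.
case: q hsz hs {hev h2} => [|x0 [|x1 [|x2 [|x3 [|x4 [|x5 [|x6 q]]]]]]] /= hsz; try by case: hsz.
- rewrite !andbT => _ /and4P[/and4P[a01 a12 a23 a30] u0 u1 u2] hcb.
  move: u0 u1 u2; rewrite !inE !negb_or => /and3P[u01 u02 u03] /andP[u12 u13] u23.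
  rewrite hcb /= ?inE ?negb_or /=; split; last by left.
  rewrite (projS a01) (projD a01 a12 u02) (projS3 a01 a12 a23).
  rewrite (projS a12) (projD a12 a23 u13) (projS a23) //.
- rewrite !andbT => _ /andP[/andP[a01 /andP[a12 /andP[a23 /andP[a34 /andP[a45 a50]]]]] /andP[u0 /andP[u1 /andP[u2 /andP[u3 u4]]]]] hcb.
  move: u0 u1 u2 u3 u4; rewrite !inE !negb_or.
  move=> /and5P[u01 u02 u03 u04 u05] /and4P[u12 u13 u14 u15] /and3P[u23 u24 u25] /andP[u34 u35] u45.
  rewrite hcb /= ?inE ?negb_or /=; split; last by right.
  have a05 : adjL x0 x5 by rewrite adjL_sym.
  have a10 : adjL x1 x0 by rewrite adjL_sym.
  have a54 : adjL x5 x4 by rewrite adjL_sym.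
  rewrite (projS a01) (projD a01 a12 u02) (projS3 a01 a12 a23).
  rewrite (projD a05 a54 u04) (projS a05).
  rewrite (projS a12) (projD a12 a23 u13) (projS3 a12 a23 a34).
  rewrite (projD a10 a05 u15).
  rewrite (projS a23) (projD a23 a34 u24) (projS3 a23 a34 a45).
  rewrite (projS a34) (projD a34 a45 u35) (projS a45) //.
Qed.

Lemma girth8 N : (forall p, is_cycle adjB p -> size p <> 4 /\ size p <> 6) ->
  has_ncycles adjL 8 N -> 0 < N -> girth_is adjL 8.
Proof.
move=> hb [F [hF hE]] hN; split.
  have : 0 < #|F| by apply: leq_trans hF.
  rewrite card_gt0 => /set0Pn[E /hE [p [hp hs _]]]; by exists p.
move=> q hq; rewrite leqNgt; apply/negP => hs.
have [p [hp [h4|h6]]] := short_cycle hq hs; have [n4 n6] := hb p hp; by [].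
Qed.

End Lift.

Section Spec.
Variables (s : nat) (B : 'M['F_2]_s).

Local Notation RR := ('I_s * 'I_s)%type.
Local Notation V := (RR + (RR + RR))%type.
Definition Lv (j1 j2 : 'I_s) : V := inr (inl (j1, j2)).
Definition Rv (j1 j2 : 'I_s) : V := inr (inr (j1, j2)).
Definition Xv (i1 i2 : 'I_s) : V := inl (i1, i2).

Lemma idm_neq0 (T : finType) (a : 'F_2) (i j : T) :
  (a * idm i j != 0)%R = (a != 0)%R && (i == j).
Proof. by rewrite /idm; case: (i == j) => /=; rewrite ?mulr1 ?andbT ?mulr0 ?eqxx ?andbF. Qed.
Lemma idm_neq0l (T : finType) (a : 'F_2) (i j : T) :
  (idm i j * a != 0)%R = (i == j) && (a != 0)%R.
Proof. by rewrite mulrC idm_neq0 andbC. Qed.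

Lemma HX_L i1 i2 j1 j2 : (HX B (i1, i2) (inl (j1, j2)) != 0)%R = (B i1 j1 != 0)%R && (i2 == j2).
Proof. by rewrite /HX /hcat /kron /= idm_neq0. Qed.
Lemma HX_R i1 i2 j1 j2 : (HX B (i1, i2) (inr (j1, j2)) != 0)%R = (i1 == j1) && (B j2 i2 != 0)%R.
Proof. by rewrite /HX /hcat /kron /= idm_neq0l. Qed.
Lemma HZ_L k1 k2 j1 j2 : (HZ B (k1, k2) (inl (j1, j2)) != 0)%R = (k1 == j1) && (B k2 j2 != 0)%R.
Proof. by rewrite /HZ /hcat /kron /= idm_neq0l. Qed.
Lemma HZ_R k1 k2 j1 j2 : (HZ B (k1, k2) (inr (j1, j2)) != 0)%R = (B j1 k1 != 0)%R && (k2 == j2).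
Proof. by rewrite /HZ /hcat /kron /= idm_neq0. Qed.

Lemma kron_neq0 (R1 C1 R2 C2 : finType) (A : bmat R1 C1) (A' : bmat R2 C2) r c :
  (kron A A' r c != 0)%R = (A r.1 c.1 != 0)%R && (A' r.2 c.2 != 0)%R.
Proof. by rewrite /kron mulf_eq0 negb_or. Qed.
Lemma idm_ne0 (T : finType) (i j : T) : (idm i j != 0)%R = (i == j).
Proof. by rewrite /idm; case: (i == j); rewrite /= ?oner_neq0 ?eqxx. Qed.

Lemma eq_inl (A A' : eqType) (x y : A) : (inl x == inl y :> A + A') = (x == y).
Proof. by apply/eqP/eqP => [[]|->]. Qed.
Lemma eq_inr (A A' : eqType) (x y : A') : (inr x == inr y :> A + A') = (x == y).
Proof. by apply/eqP/eqP => [[]|->]. Qed.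

Lemma eq_inlr (A A' : eqType) (x : A) (y : A') : (inl x == inr y :> A + A') = false.
Proof. by []. Qed.
Lemma eq_inrl (A A' : eqType) (x : A') (y : A) : (inr x == inl y :> A + A') = false.
Proof. by []. Qed.
Definition eqsE := (eq_inr, eq_inl, eq_inlr, eq_inrl, xpair_eqE, eqxx).

Definition cycX (k1 k2 a b c d : 'I_s) : seq V :=
  [:: Lv k1 a; Xv c a; Rv c k2; Xv c b; Lv k1 b; Xv d b; Rv d k2; Xv d a].
Definition cycZ (i1 i2 a b c d : 'I_s) : seq V :=
  [:: Lv a i2; Xv a c; Rv i1 c; Xv b c; Lv b i2; Xv b d; Rv i1 d; Xv a d].

Lemma cycX_ok k1 k2 a b c d : a != b -> c != d ->
  (B c k1 != 0)%R -> (B d k1 != 0)%R -> (B k2 a != 0)%R -> (B k2 b != 0)%R ->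
  is_cycle (tanner (HX B)) (cycX k1 k2 a b c d).
Proof.
move=> hab hcd h1 h2 h3 h4.
rewrite /is_cycle /ucycleb /cycX /Lv /Rv /Xv /= !kron_neq0 /= !idm_ne0 /mx_of_B /trm !eqxx h1 h2 h3 h4 /=.
rewrite !inE !eqsE (eq_sym b a) (negbTE hab) (negbTE hcd) /= ?andbF //.
Qed.

Lemma cycZ_ok i1 i2 a b c d : a != b -> c != d ->
  (B i1 a != 0)%R -> (B i1 b != 0)%R -> (B c i2 != 0)%R -> (B d i2 != 0)%R ->
  is_cycle (tanner (HZ B)) (cycZ i1 i2 a b c d).
Proof.
move=> hab hcd h1 h2 h3 h4.
rewrite /is_cycle /ucycleb /cycZ /Lv /Rv /Xv /= !kron_neq0 /= !idm_ne0 /mx_of_B /trm !eqxx h1 h2 h3 h4 /=.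
rewrite !inE !eqsE (eq_sym b a) (negbTE hab) (negbTE hcd) /= ?andbF //.
Qed.

Lemma modz0D (P : nat) (x y : int) : (x = 0 %[mod Posz P])%Z -> (y = 0 %[mod Posz P])%Z ->
  (x + y = 0 %[mod Posz P])%Z.
Proof. by move=> hx hy; rewrite -modzDm hx hy modzDm addr0. Qed.

Lemma voltX (P : nat) k1 k2 a b c d
  (sX : RR -> RR + RR -> 'I_P) (sZ : RR -> RR + RR -> 'I_P) :
  (B c k1 != 0)%R -> (B d k1 != 0)%R -> (B k2 a != 0)%R -> (B k2 b != 0)%R ->
  css_orth (HX B) (HZ B) sX sZ -> (voltage sX (cycX k1 k2 a b c d) = 0 %[mod Posz P])%Z.
Proof.
move=> h1 h2 h3 h4 hc.
have K1 := hc (c, a) (k1, k2) (inr (c, k2)) (inl (k1, a)) isT.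
have K2 := hc (c, b) (k1, k2) (inl (k1, b)) (inr (c, k2)) isT.
have K3 := hc (d, b) (k1, k2) (inr (d, k2)) (inl (k1, b)) isT.
have K4 := hc (d, a) (k1, k2) (inl (k1, a)) (inr (d, k2)) isT.
rewrite ?HX_L ?HX_R ?HZ_L ?HZ_R !eqxx h1 h2 h3 h4 in K1 K2 K3 K4.
have := modz0D (modz0D (K1 isT isT isT isT) (K2 isT isT isT isT))
                (modz0D (K3 isT isT isT isT) (K4 isT isT isT isT)).
rewrite /voltage /cycX /Lv /Rv /Xv /= !big_cons big_nil /=.
congr (_ = _ %[mod _])%Z; ring.
Qed.

Lemma voltZ (P : nat) i1 i2 a b c d
  (sX : RR -> RR + RR -> 'I_P) (sZ : RR -> RR + RR -> 'I_P) :
  (B i1 a != 0)%R -> (B i1 b != 0)%R -> (B c i2 != 0)%R -> (B d i2 != 0)%R ->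
  css_orth (HX B) (HZ B) sX sZ -> (voltage sZ (cycZ i1 i2 a b c d) = 0 %[mod Posz P])%Z.
Proof.
move=> h1 h2 h3 h4 hc.
have K1 := hc (i1, i2) (a, c) (inl (a, i2)) (inr (i1, c)) isT.
have K2 := hc (i1, i2) (b, c) (inr (i1, c)) (inl (b, i2)) isT.
have K3 := hc (i1, i2) (b, d) (inl (b, i2)) (inr (i1, d)) isT.
have K4 := hc (i1, i2) (a, d) (inr (i1, d)) (inl (a, i2)) isT.
rewrite ?HX_L ?HX_R ?HZ_L ?HZ_R !eqxx h1 h2 h3 h4 in K1 K2 K3 K4.
have := modz0D (modz0D (K1 isT isT isT isT) (K2 isT isT isT isT))
                (modz0D (K3 isT isT isT isT) (K4 isT isT isT isT)).
rewrite /voltage /cycZ /Lv /Rv /Xv /= !big_cons big_nil /=.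
congr (_ = _ %[mod _])%Z; ring.
Qed.

Definition Dom (g h : RR -> {set 'I_s}) : {set RR * ({set 'I_s} * {set 'I_s})} :=
  [set t : RR * ({set 'I_s} * {set 'I_s}) | ((t.2.1 \subset g t.1) && (#|t.2.1| == 2)) && ((t.2.2 \subset h t.1) && (#|t.2.2| == 2))].

Lemma card_Dom (g h : RR -> {set 'I_s}) w :
  (forall k, #|g k| = w) -> (forall k, #|h k| = w) -> #|Dom g h| = s ^ 2 * 'C(w, 2) ^ 2.
Proof.
move=> hg hh; rewrite /Dom -sum1dep_card.
pose Q (t1 : RR) (t2 : {set 'I_s} * {set 'I_s}) :=
  ((t2.1 \subset g t1) && (#|t2.1| == 2)) && ((t2.2 \subset h t1) && (#|t2.2| == 2)).
transitivity (\sum_(t1 : RR) \sum_(t2 | Q t1 t2) 1).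
  by rewrite (pair_big_dep xpredT Q (fun _ _ => 1)); apply: eq_bigl => -[].
transitivity (\sum_(t1 : RR) ('C(w, 2) * 'C(w, 2))).
  apply: eq_bigr => t1 _.
  rewrite -(pair_big (fun A : {set 'I_s} => (A \subset g t1) && (#|A| == 2))
                     (fun C : {set 'I_s} => (C \subset h t1) && (#|C| == 2)) (fun _ _ => 1)).
  rewrite /= sum_nat_cond_const cards_draws hg.
  by rewrite sum1dep_card cards_draws hh.
by rewrite sum_nat_const card_prod card_ord !mulnn.
Qed.

Definition e0 (d : 'I_s) (A : {set 'I_s}) := nth d (enum A) 0.
Definition e1 (d : 'I_s) (A : {set 'I_s}) := nth d (enum A) 1.

Lemma two d (A : {set 'I_s}) : #|A| = 2 ->
  e0 d A != e1 d A /\ forall x, (x \in A) = (x == e0 d A) || (x == e1 d A).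
Proof.
rewrite cardE /e0 /e1 => hs.
have hu := enum_uniq (mem A).
have hm : forall x, (x \in A) = (x \in enum A) by move=> x; rewrite mem_enum.
move: hs hu hm; case: (enum A) => [|a [|b [|]]] //= _.
rewrite inE andbT => hab hm; split => // x; by rewrite hm !inE.
Qed.

Lemma mem_cyc (T : finType) (p : seq T) v : (v \in p) = (v \in cover (cyc_edges p)).
Proof.
apply/idP/idP.
  move=> hv; apply/bigcupP.
  have hi : index v p < size p by rewrite index_mem.
  have hsz : size p = size (rot 1 p) by rewrite size_rot.
  exists [set v; nth v (rot 1 p) (index v p)]; last by rewrite !inE eqxx.
  apply/imsetP; exists (v, nth v (rot 1 p) (index v p)) => //.
  have -> : (v, nth v (rot 1 p) (index v p)) = nth (v, v) (zip p (rot 1 p)) (index v p).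
    by rewrite nth_zip // nth_index.
  by apply: mem_nth; rewrite size_zip -hsz minnn.
move=> /bigcupP[e /imsetP[[x y] hxy ->]].
have hsz : size p = size (rot 1 p) by rewrite size_rot.
have := nth_index (v, v) hxy; rewrite nth_zip //; case=> hx hy.
have hi : index (x, y) (zip p (rot 1 p)) < size p.
  by move: hxy; rewrite -index_mem size_zip -hsz minnn.
rewrite !inE => /orP[] /eqP ->.
  by rewrite -hx mem_nth.
by rewrite -(mem_rot 1) -hy mem_nth // -hsz.
Qed.

Lemma memX_L k1 k2 a b c d k x :
  (Lv k x \in cycX k1 k2 a b c d) = (k == k1) && ((x == a) || (x == b)).
Proof. by rewrite /cycX /Lv /Rv /Xv !inE !eqsE /= ?orbF andb_orr. Qed.
Lemma memX_R k1 k2 a b c d k x :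
  (Rv x k \in cycX k1 k2 a b c d) = (k == k2) && ((x == c) || (x == d)).
Proof. by rewrite /cycX /Lv /Rv /Xv !inE !eqsE /= ?orbF andb_orr !(andbC (k == k2)). Qed.
Lemma memZ_L i1 i2 a b c d k x :
  (Lv x k \in cycZ i1 i2 a b c d) = (k == i2) && ((x == a) || (x == b)).
Proof. by rewrite /cycZ /Lv /Rv /Xv !inE !eqsE /= ?orbF andb_orr !(andbC (k == i2)). Qed.
Lemma memZ_R i1 i2 a b c d k x :
  (Rv k x \in cycZ i1 i2 a b c d) = (k == i1) && ((x == c) || (x == d)).
Proof. by rewrite /cycZ /Lv /Rv /Xv !inE !eqsE /= ?orbF andb_orr. Qed.

Definition cX (t : RR * ({set 'I_s} * {set 'I_s})) :=
  cycX t.1.1 t.1.2 (e0 t.1.1 t.2.1) (e1 t.1.1 t.2.1) (e0 t.1.1 t.2.2) (e1 t.1.1 t.2.2).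
Definition cZ (t : RR * ({set 'I_s} * {set 'I_s})) :=
  cycZ t.1.1 t.1.2 (e0 t.1.1 t.2.1) (e1 t.1.1 t.2.1) (e0 t.1.1 t.2.2) (e1 t.1.1 t.2.2).

Lemma injX g h : {in Dom g h &, injective (fun t => cyc_edges (cX t))}.
Proof.
move=> [[k1 k2] [A C]] [[k1' k2'] [A' C']]; rewrite !inE /=.
move=> /andP[/andP[_ /eqP hA] /andP[_ /eqP hC]] /andP[/andP[_ /eqP hA'] /andP[_ /eqP hC']] he.
have hv : forall v, (v \in cX (k1, k2, (A, C))) = (v \in cX (k1', k2', (A', C'))).
  by move=> v; rewrite !mem_cyc he.
have [nA mA] := two k1 hA; have [nC mC] := two k1 hC.
have [nA' mA'] := two k1' hA'; have [nC' mC'] := two k1' hC'.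
have e1k : k1 = k1'.
  by have := hv (Lv k1 (e0 k1 A)); rewrite /cX /= !memX_L !eqxx /= => /esym; case: eqP.
subst k1'.
have e2k : k2 = k2'.
  by have := hv (Rv (e0 k1 C) k2); rewrite /cX /= !memX_R !eqxx /= => /esym; case: eqP.
subst k2'.
have eA : A = A'.
  apply/setP => x; rewrite mA mA'.
  by have := hv (Lv k1 x); rewrite /cX /= !memX_L eqxx.
have eC : C = C'.
  apply/setP => x; rewrite mC mC'.
  by have := hv (Rv x k2); rewrite /cX /= !memX_R eqxx.
by rewrite eA eC.
Qed.

Lemma injZ g h : {in Dom g h &, injective (fun t => cyc_edges (cZ t))}.
Proof.
move=> [[k1 k2] [A C]] [[k1' k2'] [A' C']]; rewrite !inE /=.
move=> /andP[/andP[_ /eqP hA] /andP[_ /eqP hC]] /andP[/andP[_ /eqP hA'] /andP[_ /eqP hC']] he.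
have hv : forall v, (v \in cZ (k1, k2, (A, C))) = (v \in cZ (k1', k2', (A', C'))).
  by move=> v; rewrite !mem_cyc he.
have [nA mA] := two k1 hA; have [nC mC] := two k1 hC.
have [nA' mA'] := two k1' hA'; have [nC' mC'] := two k1' hC'.
have e1k : k1 = k1'.
  by have := hv (Rv k1 (e0 k1 C)); rewrite /cZ /= !memZ_R !eqxx /= => /esym; case: eqP.
subst k1'.
have e2k : k2 = k2'.
  by have := hv (Lv (e0 k1 A) k2); rewrite /cZ /= !memZ_L !eqxx /= => /esym; case: eqP.
subst k2'.
have eA : A = A'.
  apply/setP => x; rewrite mA mA'.
  by have := hv (Lv x k2); rewrite /cZ /= !memZ_L eqxx.
have eC : C = C'.
  apply/setP => x; rewrite mC mC'.
  by have := hv (Rv k1 x); rewrite /cZ /= !memZ_R eqxx.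
by rewrite eA eC.
Qed.

Lemma forcedX w P :
  (forall i : 'I_s, #|[set j | B i j != 0%R]| = w) ->
  (forall j : 'I_s, #|[set i | B i j != 0%R]| = w) ->
  exists F : {set {set {set V}}},
    s ^ 2 * 'C(w, 2) ^ 2 <= #|F| /\
    forall E, E \in F ->
      exists p, [/\ is_cycle (tanner (HX B)) p, size p = 8, E = cyc_edges p &
        forall (sX : RR -> RR + RR -> 'I_P) (sZ : RR -> RR + RR -> 'I_P),
          css_orth (HX B) (HZ B) sX sZ -> (voltage sX p = 0 %[mod (Posz P)])%Z].
Proof.
move=> hr hc.
pose g := fun t1 : RR => [set j | B t1.2 j != 0%R].
pose h := fun t1 : RR => [set i | B i t1.1 != 0%R].
exists [set cyc_edges (cX t) | t in Dom g h]; split.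
  rewrite (card_in_imset (@injX g h)) (@card_Dom g h w) // => k; [exact: hr | exact: hc].
move=> E /imsetP[[[k1 k2] [A C]] ht ->].
move: ht; rewrite inE /= => /andP[/andP[sA /eqP hA] /andP[sC /eqP hC]].
have [nA mA] := two k1 hA; have [nC mC] := two k1 hC.
have hA0 : e0 k1 A \in A by rewrite mA eqxx.
have hA1 : e1 k1 A \in A by rewrite mA eqxx orbT.
have hC0 : e0 k1 C \in C by rewrite mC eqxx.
have hC1 : e1 k1 C \in C by rewrite mC eqxx orbT.
move: (subsetP sA _ hA0) (subsetP sA _ hA1) (subsetP sC _ hC0) (subsetP sC _ hC1).
rewrite !inE /= => b1 b2 b3 b4.
exists (cX (k1, k2, (A, C))); split => //.
- exact: cycX_ok.
- by move=> sX sZ; apply: voltX.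
Qed.

Lemma forcedZ w P :
  (forall i : 'I_s, #|[set j | B i j != 0%R]| = w) ->
  (forall j : 'I_s, #|[set i | B i j != 0%R]| = w) ->
  exists F : {set {set {set V}}},
    s ^ 2 * 'C(w, 2) ^ 2 <= #|F| /\
    forall E, E \in F ->
      exists p, [/\ is_cycle (tanner (HZ B)) p, size p = 8, E = cyc_edges p &
        forall (sX : RR -> RR + RR -> 'I_P) (sZ : RR -> RR + RR -> 'I_P),
          css_orth (HX B) (HZ B) sX sZ -> (voltage sZ p = 0 %[mod (Posz P)])%Z].
Proof.
move=> hr hc.
pose g := fun t1 : RR => [set j | B t1.1 j != 0%R].
pose h := fun t1 : RR => [set i | B i t1.2 != 0%R].
exists [set cyc_edges (cZ t) | t in Dom g h]; split.
  rewrite (card_in_imset (@injZ g h)) (@card_Dom g h w) // => k; [exact: hr | exact: hc].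
move=> E /imsetP[[[k1 k2] [A C]] ht ->].
move: ht; rewrite inE /= => /andP[/andP[sA /eqP hA] /andP[sC /eqP hC]].
have [nA mA] := two k1 hA; have [nC mC] := two k1 hC.
have hA0 : e0 k1 A \in A by rewrite mA eqxx.
have hA1 : e1 k1 A \in A by rewrite mA eqxx orbT.
have hC0 : e0 k1 C \in C by rewrite mC eqxx.
have hC1 : e1 k1 C \in C by rewrite mC eqxx orbT.
move: (subsetP sA _ hA0) (subsetP sA _ hA1) (subsetP sC _ hC0) (subsetP sC _ hC1).
rewrite !inE /= => b1 b2 b3 b4.
exists (cZ (k1, k2, (A, C))); split => //.
- exact: cycZ_ok.
- by move=> sX sZ; apply: voltZ.
Qed.

End Spec.
End Aux.
Import Aux.

Theorem mainTheorem4 (s w : nat) (B : 'M['F_2]_s) :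
  (forall i : 'I_s, #|[set j | B i j != 0%R]| = w) ->
  (forall j : 'I_s, #|[set i | B i j != 0%R]| = w) ->
  (forall P : nat, 0 < P ->
     (* forced 8-cycles of the base Tanner graphs: zero voltage for every
        orthogonality-respecting CPM P lift *)
     (exists F : {set {set {set ('I_s * 'I_s) + (('I_s * 'I_s) + ('I_s * 'I_s))}}},
        s ^ 2 * 'C(w, 2) ^ 2 <= #|F| /\
        forall E, E \in F ->
          exists p, [/\ is_cycle (tanner (HX B)) p, size p = 8, E = cyc_edges p &
            forall (sX : 'I_s * 'I_s -> ('I_s * 'I_s) + ('I_s * 'I_s) -> 'I_P)
                   (sZ : 'I_s * 'I_s -> ('I_s * 'I_s) + ('I_s * 'I_s) -> 'I_P),
              css_orth (HX B) (HZ B) sX sZ -> (voltage sX p = 0 %[mod (Posz P)])%Z]) /\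
     (exists F : {set {set {set ('I_s * 'I_s) + (('I_s * 'I_s) + ('I_s * 'I_s))}}},
        s ^ 2 * 'C(w, 2) ^ 2 <= #|F| /\
        forall E, E \in F ->
          exists p, [/\ is_cycle (tanner (HZ B)) p, size p = 8, E = cyc_edges p &
            forall (sX : 'I_s * 'I_s -> ('I_s * 'I_s) + ('I_s * 'I_s) -> 'I_P)
                   (sZ : 'I_s * 'I_s -> ('I_s * 'I_s) + ('I_s * 'I_s) -> 'I_P),
              css_orth (HX B) (HZ B) sX sZ -> (voltage sZ p = 0 %[mod (Posz P)])%Z]) /\
     (* hence the lifted Tanner graphs contain at least N_8 8-cycles *)
     (forall (sX : 'I_s * 'I_s -> ('I_s * 'I_s) + ('I_s * 'I_s) -> 'I_P)
             (sZ : 'I_s * 'I_s -> ('I_s * 'I_s) + ('I_s * 'I_s) -> 'I_P),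
        css_orth (HX B) (HZ B) sX sZ ->
        has_ncycles (tanner (cpm_lift (HX B) sX)) 8 (s ^ 2 * 'C(w, 2) ^ 2) /\
        has_ncycles (tanner (cpm_lift (HZ B) sZ)) 8 (s ^ 2 * 'C(w, 2) ^ 2))) /\
  ((forall p, is_cycle (tanner (HX B)) p -> size p <> 4 /\ size p <> 6) ->
   (forall p, is_cycle (tanner (HZ B)) p -> size p <> 4 /\ size p <> 6) ->
   0 < s -> 1 < w ->
   forall P : nat, 0 < P ->
   forall (sX : 'I_s * 'I_s -> ('I_s * 'I_s) + ('I_s * 'I_s) -> 'I_P)
          (sZ : 'I_s * 'I_s -> ('I_s * 'I_s) + ('I_s * 'I_s) -> 'I_P),
     css_orth (HX B) (HZ B) sX sZ ->
     girth_is (tanner (cpm_lift (HX B) sX)) 8 /\ girth_is (tanner (cpm_lift (HZ B) sZ)) 8).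
Proof.
move=> hr hc.
have part1 : forall P : nat, 0 < P ->
  forall (sX : 'I_s * 'I_s -> ('I_s * 'I_s) + ('I_s * 'I_s) -> 'I_P)
         (sZ : 'I_s * 'I_s -> ('I_s * 'I_s) + ('I_s * 'I_s) -> 'I_P),
    css_orth (HX B) (HZ B) sX sZ ->
    has_ncycles (tanner (cpm_lift (HX B) sX)) 8 (s ^ 2 * 'C(w, 2) ^ 2) /\
    has_ncycles (tanner (cpm_lift (HZ B) sZ)) 8 (s ^ 2 * 'C(w, 2) ^ 2).
  move=> P hP sX sZ hcss; split.
    apply: (@lift_count _ _ (HX B) P hP sX).
    have [F [hF hE]] := @forcedX s B w P hr hc.
    exists F; split; first exact: hF.
    move=> E /hE [p [h1 h2 h3 h4]].
    exists p; split; [exact: h1 | exact: h2 | exact: h3 | exact: (h4 sX sZ hcss)].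
  apply: (@lift_count _ _ (HZ B) P hP sZ).
  have [F [hF hE]] := @forcedZ s B w P hr hc.
  exists F; split; first exact: hF.
  move=> E /hE [p [h1 h2 h3 h4]].
  exists p; split; [exact: h1 | exact: h2 | exact: h3 | exact: (h4 sX sZ hcss)].
split.
  move=> P hP; split; first exact: (@forcedX s B w P hr hc).
  split; first exact: (@forcedZ s B w P hr hc).
  exact: part1 P hP.
move=> hX hZ hs hw P hP sX sZ hcss.
have hN : 0 < s ^ 2 * 'C(w, 2) ^ 2 by rewrite muln_gt0 !expn_gt0 hs bin_gt0 hw.
have [h1 h2] := part1 P hP sX sZ hcss.
split.
  exact: (girth8 hX h1 hN).
exact: (girth8 hZ h2 hN).
Qed.
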